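(* There exist functions $f_n\colon\mathbb R^2\to\mathbb R$, $n\in\mathbb N$, such that the family $\{f_n(x,\cdot):n\in\mathbb N\}$ is equi-Baire 1 for every $x\in\mathbb R$ and the family $\{f_n(\cdot,y):n\in\mathbb N\}$ is equi-Baire 1 for every $y\in\mathbb R$, but for no nonmeager $G_\delta$ set $A\subseteq\mathbb R$ (in particular, for no comeager $G_\delta$ set $A$) is the family $\{f_n|_{A\times\mathbb R}:n\in\mathbb N\}$ equi-Baire 1 on $A\times\mathbb R$. Specifically, one can take $f_n=g$ for all $n$, where $g$ is the characteristic function of $\{(x,x):x\in B\}$ for a Bernstein set $B\subseteq\mathbb R$.
   Context: For metric spaces $(X,\rho)$, $(Y,d)$, a family $\mathcal F\subseteq Y^X$ is equi-Baire 1 if for every $\varepsilon>0$ there is $\delta_\varepsilon\colon X\to(0,\infty)$ such that for all $x,y\in X$ and all $f\in\mathcal F$, $\rho(x,y)<\min\{\delta_\varepsilon(x),\delta_\varepsilon(y)\}$ implies $d(f(x),f(y))<\varepsilon$. A Bernstein set is a set $B\subseteq\mathbb R$ such that both $B$ and $\mathbb R\setminus B$ meet every uncountable closed subset of $\mathbb R$. $\mathbb R^2$ and subsets carry the Euclidean metric. *)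

(* Defs.v *)
From Stdlib Require Import Reals.
Open Scope R_scope.

Definition dist_R (x y : R) : R := Rabs (x - y).
Definition dist_R2 (p q : R * R) : R :=
  sqrt ((fst p - fst q) ^ 2 + (snd p - snd q) ^ 2).

Definition equi_baire1 {X : Type} (D : X -> Prop) (rho : X -> X -> R)
  (F : nat -> X -> R) : Prop :=
  forall eps : R, 0 < eps ->
  exists delta : X -> R, (forall x, D x -> 0 < delta x) /\
    forall x y, D x -> D y -> forall n : nat,
      rho x y < Rmin (delta x) (delta y) -> Rabs (F n x - F n y) < eps.

Definition open_R (U : R -> Prop) : Prop :=
  forall x, U x -> exists e, 0 < e /\ forall y, Rabs (y - x) < e -> U y.
Definition closed_R (C : R -> Prop) : Prop := open_R (fun x => ~ C x).
Definition closure_R (A : R -> Prop) (x : R) : Prop :=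
  forall e, 0 < e -> exists y, A y /\ Rabs (y - x) < e.
Definition nowhere_dense_R (N : R -> Prop) : Prop :=
  ~ exists x e, 0 < e /\ forall y, Rabs (y - x) < e -> closure_R N y.
Definition meager_R (M : R -> Prop) : Prop :=
  exists N : nat -> R -> Prop, (forall n, nowhere_dense_R (N n)) /\
    forall x, M x -> exists n, N n x.
Definition G_delta_R (A : R -> Prop) : Prop :=
  exists U : nat -> R -> Prop, (forall n, open_R (U n)) /\
    forall x, A x <-> forall n, U n x.
Definition countable_R (A : R -> Prop) : Prop :=
  exists f : nat -> R, forall x, A x -> exists n, f n = x.

Definition bernstein (B : R -> Prop) : Prop :=
  forall C : R -> Prop, closed_R C -> ~ countable_R C ->
    (exists x, C x /\ B x) /\ (exists x, C x /\ ~ B x).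

(* Main.v *)
Require Import Defs.
From Stdlib Require Import Reals.
Open Scope R_scope.
From Stdlib Require Import Reals Lra Lia Classical ClassicalEpsilon FunctionalExtensionality Cantor.
From mathcomp Require ssreflect ssrfun ssrbool eqtype boolp wochoice Rstruct.
Open Scope R_scope.

Definition qr (n : nat) : R :=
  let (a, bc) := Cantor.of_nat n in let (b, c) := Cantor.of_nat bc in
  (INR a - INR b) / (INR c + 1).

Lemma IZR_nat_diff z : IZR z = INR (Z.to_nat z) - INR (Z.to_nat (- z)).
Proof.
  rewrite !INR_IZR_INZ, <- minus_IZR. f_equal. lia.
Qed.

Lemma qr_dense x y : x < y -> exists n, x < qr n < y.
Proof.
  intros Hxy.
  destruct (archimed_cor1 (y - x)) as [N [HN HN0]]; [lra|].
  assert (HNp : 0 < INR N) by (apply lt_0_INR; lia).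
  destruct (archimed (x * INR N)) as [H1 H2].
  set (k := up (x * INR N)) in *.
  exists (Cantor.to_nat (Z.to_nat k, Cantor.to_nat (Z.to_nat (-k), (N - 1)%nat))).
  unfold qr. rewrite !Cantor.cancel_of_to.
  rewrite <- IZR_nat_diff.
  replace (INR (N - 1) + 1) with (INR N).
  2:{ rewrite minus_INR by lia. simpl. lra. }
  assert (Hinv : / INR N * INR N = 1) by (field; lra).
  assert (1 < (y - x) * INR N).
  { apply Rmult_lt_compat_r with (r := INR N) in HN; lra. }
  split.
  - apply Rmult_lt_reg_r with (INR N); auto. unfold Rdiv. rewrite Rmult_assoc, Rinv_l by lra. lra.
  - apply Rmult_lt_reg_r with (INR N); auto. unfold Rdiv. rewrite Rmult_assoc, Rinv_l by lra. lra.
Qed.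

Lemma countable_sub (S T : R -> Prop) :
  (forall x, S x -> T x) -> countable_R T -> countable_R S.
Proof. intros H [f Hf]. exists f. intros x Sx. apply Hf, H, Sx. Qed.

Lemma nested (a b : nat -> R) :
  (forall k, a k < a (S k) /\ a (S k) < b (S k) /\ b (S k) < b k) ->
  exists y, forall k, a k < y < b k.
Proof.
  intros H.
  assert (Hm : forall k d, a k <= a (k + d)%nat /\ b (k + d)%nat <= b k).
  { intros k d. induction d as [|d IH].
    - rewrite Nat.add_0_r. lra.
    - rewrite Nat.add_succ_r. destruct (H (k + d)%nat) as [H1 [H2 H3]]. lra. }
  assert (Hab : forall k, a k < b k).
  { intros k. destruct (H k) as [H1 [H2 H3]]. lra. }
  assert (Hb : forall k m, a k <= b m).
  { intros k m. destruct (Nat.le_ge_cases k m) as [Hk|Hk].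
    - destruct (Hm k (m - k)%nat) as [H1 _]. replace (k + (m - k))%nat with m in H1 by lia.
      specialize (Hab m). lra.
    - destruct (Hm m (k - m)%nat) as [_ H1]. replace (m + (k - m))%nat with k in H1 by lia.
      specialize (Hab k). lra. }
  destruct (completeness (fun z => exists k, z = a k)) as [y [Hy1 Hy2]].
  - exists (b 0%nat). intros z [k ->]. apply Hb.
  - exists (a 0%nat). exists 0%nat. reflexivity.
  - exists y. intros k. destruct (H k) as [H1 [H2 H3]]. split.
    + assert (a (S k) <= y) by (apply Hy1; exists (S k); reflexivity). lra.
    + assert (y <= b (S k)) by (apply Hy2; intros z [m ->]; apply Hb). lra.
Qed.

Lemma baire_step (a b : R) (U : R -> Prop) (c : R) :
  open_R U -> (forall y, a < y < b -> forall e, 0 < e -> exists z, U z /\ Rabs (z - y) < e) ->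
  forall a' b', a <= a' -> a' < b' -> b' <= b ->
  exists a'' b'', a' < a'' /\ a'' < b'' /\ b'' < b' /\
     (forall z, a'' <= z <= b'' -> U z) /\ (c < a'' \/ b'' < c).
Proof.
  intros HU Hd a' b' H1 H2 H3.
  assert (Hy0 : exists y0, a' < y0 < b' /\ y0 <> c).
  { destruct (Req_dec c ((a' + b') / 2)) as [E|E].
    - exists ((3 * a' + b') / 4). split; [lra|]. rewrite E. lra.
    - exists ((a' + b') / 2). split; [lra|]. auto. }
  destruct Hy0 as [y0 [Hy0 Hyc]].
  assert (Hc : 0 < Rabs (y0 - c)) by (apply Rabs_pos_lt; lra).
  set (rho := Rmin (Rabs (y0 - c)) (Rmin (y0 - a') (b' - y0)) / 2).
  assert (Hrho : 0 < rho).
  { unfold rho. apply Rmin_case; [lra|]. apply Rmin_case; lra. }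
  assert (Hr1 : 2 * rho <= Rabs (y0 - c)) by (unfold rho; generalize (Rmin_l (Rabs (y0 - c)) (Rmin (y0 - a') (b' - y0))); lra).
  assert (Hr2 : 2 * rho <= y0 - a') by (unfold rho; generalize (Rmin_r (Rabs (y0 - c)) (Rmin (y0 - a') (b' - y0))) (Rmin_l (y0 - a') (b' - y0)); lra).
  assert (Hr3 : 2 * rho <= b' - y0) by (unfold rho; generalize (Rmin_r (Rabs (y0 - c)) (Rmin (y0 - a') (b' - y0))) (Rmin_r (y0 - a') (b' - y0)); lra).
  destruct (Hd y0 ltac:(lra) rho Hrho) as [z [Uz Hz]].
  destruct (HU z Uz) as [e' [He' HU']].
  assert (Hz' : Rabs (z - y0) < rho) by exact Hz.
  set (s := Rmin e' (rho - Rabs (z - y0)) / 2).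
  assert (Hs : 0 < s) by (unfold s; apply Rmin_case; lra).
  assert (Hs1 : 2 * s <= e') by (unfold s; generalize (Rmin_l e' (rho - Rabs (z - y0))); lra).
  assert (Hs2 : 2 * s <= rho - Rabs (z - y0)) by (unfold s; generalize (Rmin_r e' (rho - Rabs (z - y0))); lra).
  exists (z - s), (z + s).
  apply Rabs_def2 in Hz'. destruct Hz' as [Hz1 Hz2].
  assert (Hza : Rabs (z - y0) >= 0) by (apply Rle_ge, Rabs_pos).
  repeat split; try lra.
  - intros w Hw. apply HU'. apply Rabs_def1; lra.
  - destruct (Rle_dec c y0) as [Hcy|Hcy].
    + rewrite Rabs_right in Hr1 by lra. left.
      assert (Rabs (z - y0) >= z - y0) by (apply Rle_ge, RRle_abs). lra.
    + rewrite Rabs_left in Hr1 by lra. right.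
      assert (Rabs (z - y0) >= - (z - y0)) by (rewrite <- Rabs_Ropp; apply Rle_ge, RRle_abs). lra.
Qed.
Lemma baire (a b : R) (U : nat -> R -> Prop) (f : nat -> R) : a < b ->
  (forall k, open_R (U k)) ->
  (forall k y, a < y < b -> forall e, 0 < e -> exists z, U k z /\ Rabs (z - y) < e) ->
  exists y, a < y < b /\ (forall k, U k y) /\ (forall k, y <> f k).
Proof.
  intros Hab HU Hd.
  set (stepP := fun k (p p' : R * R) => fst p < fst p' /\ fst p' < snd p' /\ snd p' < snd p /\
     (forall z, fst p' <= z <= snd p' -> U k z) /\ (f k < fst p' \/ snd p' < f k)).
  set (sq := fix sq (k : nat) : R * R := match k with
         | O => (a, b) | S k => epsilon (inhabits (0, 0)) (stepP k (sq k)) end).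
  assert (Hinv : forall k, a <= fst (sq k) /\ fst (sq k) < snd (sq k) /\ snd (sq k) <= b /\
                           stepP k (sq k) (sq (S k))).
  { assert (Hst : forall k, a <= fst (sq k) -> fst (sq k) < snd (sq k) -> snd (sq k) <= b ->
                   stepP k (sq k) (sq (S k))).
    { intros k H1 H2 H3. simpl. apply epsilon_spec.
      destruct (baire_step a b (U k) (f k) (HU k) (Hd k) _ _ H1 H2 H3) as [a'' [b'' H]].
      exists (a'', b''). exact H. }
    induction k as [|k IH].
    - simpl. assert (H := Hst 0%nat). simpl in H. repeat split; try lra; apply H; simpl; lra.
    - destruct IH as [H1 [H2 [H3 H4]]].
      destruct H4 as [G1 [G2 [G3 _]]].
      assert (a <= fst (sq (S k))) by lra. assert (snd (sq (S k)) <= b) by lra.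
      repeat split; try lra; apply Hst; lra. }
  destruct (nested (fun k => fst (sq k)) (fun k => snd (sq k))) as [y Hy].
  { intros k. destruct (Hinv k) as [_ [_ [_ [G1 [G2 [G3 _]]]]]]. auto. }
  exists y. split; [|split].
  - destruct (Hy 0%nat) as [H1 H2]. simpl in H1, H2. lra.
  - intros k. destruct (Hinv k) as [_ [_ [_ [_ [_ [_ [G _]]]]]]]. apply G.
    destruct (Hy (S k)). lra.
  - intros k. destruct (Hinv k) as [_ [_ [_ [_ [_ [_ [_ G]]]]]]].
    destruct (Hy (S k)). lra.
Qed.

Lemma R_uncountable a b : a < b -> ~ countable_R (fun x => a < x < b).
Proof.
  intros Hab [f Hf].
  destruct (baire a b (fun _ _ => True) f Hab) as [y [Hy [_ Hn]]].
  - intros k x _. exists 1. split; [lra|auto].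
  - intros k y _ e He. exists y. split; auto. unfold Rminus. rewrite Rplus_opp_r, Rabs_R0. lra.
  - destruct (Hf y Hy) as [n Hn']. apply (Hn n). auto.
Qed.
Definition cpt (S : R -> Prop) (p : R) := S p /\
  forall r, 0 < r -> ~ countable_R (fun x => S x /\ p - r < x < p + r).

Lemma cond (S : R -> Prop) : ~ countable_R S ->
  exists p q, p < q /\ cpt S p /\ cpt S q.
Proof.
  intros HS. apply NNPP. intros H. apply HS.
  assert (Huniq : forall x y, cpt S x -> cpt S y -> x = y).
  { intros x y Hx Hy. destruct (Rtotal_order x y) as [E|[E|E]]; auto.
    - exfalso. apply H. exists x, y. auto.
    - exfalso. apply H. exists y, x. auto. }
  set (p0 := epsilon (inhabits 0) (cpt S)).
  set (en := fun i j => epsilon (inhabits (fun _ : nat => 0))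
     (fun h => forall y, S y /\ qr i < y < qr j -> exists m, h m = y)).
  exists (fun n => match Cantor.of_nat n with
     | (O, _) => p0
     | (S _, r) => let (i, jm) := Cantor.of_nat r in let (j, m) := Cantor.of_nat jm in en i j m end).
  intros x Sx.
  destruct (classic (cpt S x)) as [Hc|Hc].
  - exists (Cantor.to_nat (0, 0)%nat). rewrite Cantor.cancel_of_to.
    apply Huniq; auto. apply epsilon_spec. exists x; auto.
  - assert (Hr : exists r, 0 < r /\ countable_R (fun y => S y /\ x - r < y < x + r)).
    { apply NNPP. intros Hn. apply Hc. split; auto. intros r Hr Hcr. apply Hn. exists r. auto. }
    destruct Hr as [r [Hr Hcr]].
    destruct (qr_dense (x - r) x) as [i Hi]; [lra|].
    destruct (qr_dense x (x + r)) as [j Hj]; [lra|].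
    assert (Hen : forall y, S y /\ qr i < y < qr j -> exists m, en i j m = y).
    { apply (epsilon_spec (inhabits (fun _ : nat => 0)) (fun h => forall y, S y /\ qr i < y < qr j -> exists m, h m = y)).
      destruct Hcr as [h Hh]. exists h. intros y [Sy Hy]. apply Hh. split; auto; lra. }
    destruct (Hen x) as [m Hm]; [split; auto; lra|].
    exists (Cantor.to_nat (1, Cantor.to_nat (i, Cantor.to_nat (j, m))))%nat.
    rewrite !Cantor.cancel_of_to. exact Hm.
Qed.
Section Scheme.
Variables (G : R -> Prop) (U : nat -> R -> Prop).
Hypothesis HU : forall n, open_R (U n).
Hypothesis HG : forall x, G x <-> forall n, U n x.

Lemma point_box (S : R -> Prop) (a b p D : R) (k : nat) :
  cpt S p -> (forall x, S x -> G x /\ a < x < b) -> 0 < D ->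
  exists a1 b1, a < a1 /\ p - D < a1 /\ a1 < b1 /\ b1 < b /\ b1 < p + D /\
    (forall z, a1 <= z <= b1 -> U k z) /\ ~ countable_R (fun x => G x /\ a1 < x < b1).
Proof.
  intros [Sp Hc] HS HD.
  destruct (HS p Sp) as [Gp Hp].
  destruct (HU k p (proj1 (HG p) Gp k)) as [e [He HUe]].
  set (r := Rmin e (Rmin (p - a) (Rmin (b - p) D)) / 2).
  assert (Hr : 0 < r) by (unfold r; repeat apply Rmin_case; lra).
  assert (R1 : 2 * r <= e) by (unfold r; generalize (Rmin_l e (Rmin (p - a) (Rmin (b - p) D))); lra).
  assert (R2 : 2 * r <= p - a) by (unfold r; generalize (Rmin_r e (Rmin (p - a) (Rmin (b - p) D))) (Rmin_l (p - a) (Rmin (b - p) D)); lra).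
  assert (R3 : 2 * r <= b - p) by (unfold r; generalize (Rmin_r e (Rmin (p - a) (Rmin (b - p) D))) (Rmin_r (p - a) (Rmin (b - p) D)) (Rmin_l (b - p) D); lra).
  assert (R4 : 2 * r <= D) by (unfold r; generalize (Rmin_r e (Rmin (p - a) (Rmin (b - p) D))) (Rmin_r (p - a) (Rmin (b - p) D)) (Rmin_r (b - p) D); lra).
  exists (p - r), (p + r). repeat split; try lra.
  - intros z Hz. apply HUe. apply Rabs_def1; lra.
  - intros Hcnt. apply (Hc r Hr). revert Hcnt. apply countable_sub.
    intros x [Sx Hx]. split; [apply HS; auto| lra].
Qed.

Lemma split_step (k : nat) (a b : R) :
  ~ countable_R (fun x => G x /\ a < x < b) ->
  exists a1 b1 a2 b2, a < a1 /\ a1 < b1 /\ b1 < a2 /\ a2 < b2 /\ b2 < b /\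
    (forall z, a1 <= z <= b1 -> U k z) /\ (forall z, a2 <= z <= b2 -> U k z) /\
    ~ countable_R (fun x => G x /\ a1 < x < b1) /\ ~ countable_R (fun x => G x /\ a2 < x < b2).
Proof.
  intros H.
  destruct (cond _ H) as [p [q [Hpq [Cp Cq]]]].
  assert (HS : forall x, (G x /\ a < x < b) -> G x /\ a < x < b) by auto.
  destruct (point_box _ a b p ((q - p) / 3) k Cp HS) as [a1 [b1 Hb1]]; [lra|].
  destruct (point_box _ a b q ((q - p) / 3) k Cq HS) as [a2 [b2 Hb2]]; [lra|].
  exists a1, b1, a2, b2. intuition lra.
Qed.

Definition sstep (k : nat) (p : R * R) : (R * R) * (R * R) :=
  epsilon (inhabits ((0, 0), (0, 0))) (fun s =>
    let '((a1, b1), (a2, b2)) := s in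
    fst p < a1 /\ a1 < b1 /\ b1 < a2 /\ a2 < b2 /\ b2 < snd p /\
    (forall z, a1 <= z <= b1 -> U k z) /\ (forall z, a2 <= z <= b2 -> U k z) /\
    ~ countable_R (fun x => G x /\ a1 < x < b1) /\ ~ countable_R (fun x => G x /\ a2 < x < b2)).

Lemma sstep_spec k p : ~ countable_R (fun x => G x /\ fst p < x < snd p) ->
  let '((a1, b1), (a2, b2)) := sstep k p in
    fst p < a1 /\ a1 < b1 /\ b1 < a2 /\ a2 < b2 /\ b2 < snd p /\
    (forall z, a1 <= z <= b1 -> U k z) /\ (forall z, a2 <= z <= b2 -> U k z) /\
    ~ countable_R (fun x => G x /\ a1 < x < b1) /\ ~ countable_R (fun x => G x /\ a2 < x < b2).
Proof.
  intros H. unfold sstep.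
  apply (epsilon_spec (inhabits ((0, 0), (0, 0))) (fun s => let '((a1, b1), (a2, b2)) := s in _)).
  destruct (split_step k (fst p) (snd p) H) as [a1 [b1 [a2 [b2 Hs]]]].
  exists ((a1, b1), (a2, b2)). exact Hs.
Qed.

Definition child (bit : bool) (k : nat) (p : R * R) : R * R :=
  if bit then fst (sstep k p) else snd (sstep k p).

Fixpoint iv (p0 : R * R) (al : nat -> bool) (k : nat) : R * R :=
  match k with O => p0 | S k => child (al k) k (iv p0 al k) end.

Lemma iv_spec p0 al : ~ countable_R (fun x => G x /\ fst p0 < x < snd p0) ->
  forall k, ~ countable_R (fun x => G x /\ fst (iv p0 al k) < x < snd (iv p0 al k)) /\
    fst (iv p0 al k) < fst (iv p0 al (S k)) /\ fst (iv p0 al (S k)) < snd (iv p0 al (S k)) /\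
    snd (iv p0 al (S k)) < snd (iv p0 al k) /\
    (forall z, fst (iv p0 al (S k)) <= z <= snd (iv p0 al (S k)) -> U k z).
Proof.
  intros H0 k. induction k as [|k IH].
  - simpl. generalize (sstep_spec 0 p0 H0). unfold child.
    destruct (sstep 0 p0) as [[a1 b1] [a2 b2]]. simpl.
    destruct (al 0%nat); simpl; intuition (first [lra | auto]).
  - destruct IH as [IH1 [IH2 [IH3 [IH4 _]]]].
    assert (Hn : ~ countable_R (fun x => G x /\ fst (iv p0 al (S k)) < x < snd (iv p0 al (S k)))).
    { simpl iv at 1 2. generalize (sstep_spec k (iv p0 al k) IH1). unfold child.
      destruct (sstep k (iv p0 al k)) as [[a1 b1] [a2 b2]]. simpl.
      destruct (al k); simpl; intuition (first [lra | auto]). }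
    split; auto.
    change (iv p0 al (S (S k))) with (child (al (S k)) (S k) (iv p0 al (S k))).
    generalize (sstep_spec (S k) _ Hn). unfold child.
    destruct (sstep (S k) (iv p0 al (S k))) as [[a1 b1] [a2 b2]]. simpl.
    destruct (al (S k)); simpl; intuition (first [lra | auto]).
Qed.

End Scheme.
Lemma perfect (G : R -> Prop) : G_delta_R G -> ~ countable_R G ->
  exists phi : (nat -> bool) -> R, (forall al be, phi al = phi be -> al = be) /\
    forall al, G (phi al).
Proof.
  intros [U [HU HG]] Hc.
  destruct (cond G Hc) as [p [_ [_ [[Gp Cp] _]]]].
  set (p0 := (p - 1, p + 1)).
  assert (H0 : ~ countable_R (fun x => G x /\ fst p0 < x < snd p0)) by (apply Cp; lra).
  set (phi := fun al => epsilon (inhabits 0) (fun y => forall k, fst (iv G U p0 al k) < y < snd (iv G U p0 al k))).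
  assert (Hphi : forall al k, fst (iv G U p0 al k) < phi al < snd (iv G U p0 al k)).
  { intros al.
    assert (E : exists y, forall k, fst (iv G U p0 al k) < y < snd (iv G U p0 al k)).
    { apply nested. intros k. destruct (iv_spec G U HU HG p0 al H0 k) as [_ [A [B [C _]]]]. auto. }
    exact (epsilon_spec _ _ E). }
  exists phi. split.
  - intros al be Heq. apply NNPP. intros Hne.
    assert (Hd : exists k, al k <> be k).
    { apply NNPP. intros Hn. apply Hne. apply functional_extensionality. intros k.
      apply NNPP. intros Hk. apply Hn. exists k. auto. }
    destruct Hd as [k Hk].
    assert (Hagree : forall k, (forall i, (i < k)%nat -> al i = be i) -> iv G U p0 al k = iv G U p0 be k).
    { induction k0 as [|k0 IH]; intros Hi; simpl; auto.
      rewrite IH by (intros i Hi'; apply Hi; lia). rewrite (Hi k0) by lia. reflexivity. }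
    assert (P : forall k, (forall i, (i < k)%nat -> al i = be i) \/ phi al <> phi be).
    { induction k0 as [|k0 IH].
      - left. intros i Hi. lia.
      - destruct IH as [IH|IH]; [|right; auto].
        destruct (Bool.bool_dec (al k0) (be k0)) as [E|E].
        + left. intros i Hi. destruct (Nat.eq_dec i k0) as [->|Hne']; auto. apply IH. lia.
        + right. pose proof (Hagree k0 IH) as Heqv.
          pose proof (Hphi al (S k0)) as Ha. pose proof (Hphi be (S k0)) as Hb.
          simpl in Ha, Hb. rewrite Heqv in Ha.
          destruct (iv_spec G U HU HG p0 be H0 k0) as [Hn _].
          pose proof (sstep_spec G U HU HG k0 _ Hn) as Hs. unfold child in Ha, Hb.
          destruct (sstep G U k0 (iv G U p0 be k0)) as [[a1 b1] [a2 b2]].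
          destruct Hs as [_ [_ [Hs _]]].
          destruct (al k0), (be k0); simpl in Ha, Hb; try congruence; lra. }
    destruct (P (S k)) as [HP|HP]; [|auto]. apply Hk. apply HP. lia.
  - intros al. apply HG. intros n.
    destruct (iv_spec G U HU HG p0 al H0 n) as [_ [_ [_ [_ HUn]]]].
    apply HUn. pose proof (Hphi al (S n)). lra.
Qed.
Lemma cut_inj : exists psi : R -> (nat -> bool), forall x y, psi x = psi y -> x = y.
Proof.
  exists (fun x n => if Rlt_dec (qr n) x then true else false).
  intros x y H. destruct (Rtotal_order x y) as [E|[E|E]]; auto; exfalso.
  - destruct (qr_dense x y E) as [n Hn].
    assert (H' := f_equal (fun f => f n) H). simpl in H'.
    destruct (Rlt_dec (qr n) x); destruct (Rlt_dec (qr n) y); try discriminate; lra.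
  - destruct (qr_dense y x E) as [n Hn].
    assert (H' := f_equal (fun f => f n) H). simpl in H'.
    destruct (Rlt_dec (qr n) x); destruct (Rlt_dec (qr n) y); try discriminate; lra.
Qed.

Definition InjR (X : R -> Prop) := exists h : R -> R,
  (forall r r', h r = h r' -> r = r') /\ forall r, X (h r).

Lemma inj_into (G : R -> Prop) : G_delta_R G -> ~ countable_R G -> InjR G.
Proof.
  intros Hg Hc. destruct (perfect G Hg Hc) as [phi [Hi HG]].
  destruct cut_inj as [psi Hpsi].
  exists (fun r => phi (psi r)). split; auto.
Qed.

Definition Cset (be : nat -> bool) (x : R) : Prop :=
  forall k, exists i j, be (Cantor.to_nat (k, Cantor.to_nat (i, j))) = true /\ qr i < x < qr j.

Lemma Cset_gdelta be : G_delta_R (Cset be).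
Proof.
  exists (fun k x => exists i j, be (Cantor.to_nat (k, Cantor.to_nat (i, j))) = true /\ qr i < x < qr j).
  split.
  - intros k x [i [j [Hb Hx]]]. exists (Rmin (x - qr i) (qr j - x)). split.
    + apply Rmin_case; lra.
    + intros y Hy. exists i, j. split; auto.
      generalize (Rmin_l (x - qr i) (qr j - x)) (Rmin_r (x - qr i) (qr j - x)).
      apply Rabs_def2 in Hy. lra.
  - intros x. unfold Cset. tauto.
Qed.

Lemma code_complete G : G_delta_R G -> exists be, forall x, G x <-> Cset be x.
Proof.
  intros [U [HU HG]].
  exists (fun n => let (k, ij) := Cantor.of_nat n in let (i, j) := Cantor.of_nat ij in
     if excluded_middle_informative (forall z, qr i < z < qr j -> U k z) then true else false).
  intros x. rewrite HG. unfold Cset. split.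
  - intros H k. destruct (HU k x (H k)) as [e [He Hb]].
    destruct (qr_dense (x - e) x) as [i Hi]; [lra|].
    destruct (qr_dense x (x + e)) as [j Hj]; [lra|].
    exists i, j. rewrite !Cantor.cancel_of_to. split; [|lra].
    destruct excluded_middle_informative as [_|Hn]; auto. exfalso. apply Hn.
    intros z Hz. apply Hb. apply Rabs_def1; lra.
  - intros H k. destruct (H k) as [i [j [Hb Hx]]]. rewrite !Cantor.cancel_of_to in Hb.
    destruct excluded_middle_informative as [Hk|_]; [|discriminate]. apply Hk; auto.
Qed.

Lemma closed_gdelta C : closed_R C -> G_delta_R C.
Proof.
  intros HC.
  exists (fun n x => exists c, C c /\ Rabs (x - c) < / (INR n + 1)). split.
  - intros n x [c [Cc Hc]]. exists (/ (INR n + 1) - Rabs (x - c)). split; [lra|].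
    intros y Hy. exists c. split; auto.
    assert (Rabs (y - c) <= Rabs (y - x) + Rabs (x - c)).
    { replace (y - c) with ((y - x) + (x - c)) by ring. apply Rabs_triang. }
    lra.
  - intros x. split.
    + intros Cx n. exists x. split; auto. unfold Rminus. rewrite Rplus_opp_r, Rabs_R0.
      apply Rinv_0_lt_compat. generalize (pos_INR n). lra.
    + intros H. apply NNPP. intros Cx. destruct (HC x Cx) as [e [He Hb]].
      destruct (archimed_cor1 e He) as [N [HN HN0]].
      destruct (H N) as [c [Cc Hc]]. apply (Hb c); auto.
      rewrite Rabs_minus_sym.
      assert (/ (INR N + 1) < / INR N).
      { apply Rinv_lt_contravar. apply Rmult_lt_0_compat; [apply lt_0_INR; lia|].
        generalize (pos_INR N); lra. lra. }
      lra.
Qed.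
Section Bern.
Variable W : R -> R -> Prop.
Hypothesis HWmin : forall P : R -> Prop, (exists x, P x) -> exists z, P z /\ forall x, P x -> W z x.
Hypothesis HWanti : forall x y, W x y -> W y x -> x = y.

Definition ltW s t := W s t /\ s <> t.

Lemma W_total s t : W s t \/ W t s.
Proof.
  destruct (HWmin (fun z => z = s \/ z = t)) as [z [[->| ->] Hz]]; [exists s; auto| |].
  - left. apply Hz. auto.
  - right. apply Hz. auto.
Qed.

Lemma ltW_wf : well_founded ltW.
Proof.
  intros a. apply NNPP. intros Ha.
  destruct (HWmin (fun x => ~ Acc ltW x)) as [z [Hz Hmin]]; [exists a; auto|].
  apply Hz. constructor. intros y [Wyz Hne]. apply NNPP. intros Hy.
  apply Hne. apply HWanti; auto.
Qed.

Definition Bad t := InjR (fun s => ltW s t).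
Definition Sidx t := forall t0, (Bad t0 /\ forall t', Bad t' -> W t0 t') -> ltW t t0.

Lemma S1 t : Sidx t -> ~ Bad t.
Proof.
  intros Hs Hb. destruct (HWmin Bad) as [t0 [Ht0 Hm]]; [exists t; auto|].
  destruct (Hs t0 (conj Ht0 Hm)) as [Htt0 Hne]. apply Hne. apply HWanti; auto.
Qed.

Lemma S2 : InjR Sidx.
Proof.
  destruct (classic (exists t, Bad t)) as [Hex|Hn].
  - destruct (HWmin Bad Hex) as [t0 [Hb0 Hm]]. pose proof Hb0 as [h [Hi Hh]].
    exists h. split; auto. intros r t1 [Hb1 Hm1].
    assert (t1 = t0) by (apply HWanti; auto). subst t1. apply Hh.
  - exists (fun r => r). split; auto. intros r t0 [Hb _]. exfalso. apply Hn. eauto.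
Qed.

Lemma R_gdelta_unc : G_delta_R (fun _ => True) /\ ~ countable_R (fun _ => True).
Proof.
  split.
  - exists (fun _ _ => True). split; [|tauto]. intros n x _. exists 1. split; [lra|auto].
  - intros Hc. apply (R_uncountable 0 1); [lra|]. revert Hc. apply countable_sub. auto.
Qed.

Lemma codes_exist : exists code : R -> (nat -> bool),
  forall be, exists t, Sidx t /\ code t = be.
Proof.
  destruct (perfect (fun _ => True) (proj1 R_gdelta_unc) (proj2 R_gdelta_unc)) as [phi0 [Hi0 _]].
  destruct S2 as [h [Hi Hh]].
  exists (fun t => epsilon (inhabits (fun _ : nat => false))
            (fun be => phi0 be = epsilon (inhabits 0) (fun r => h r = t))).
  intros be. exists (h (phi0 be)). split; auto.
  assert (E1 : epsilon (inhabits 0) (fun r => h r = h (phi0 be)) = phi0 be).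
  { apply Hi. apply (epsilon_spec (inhabits 0) (fun r => h r = h (phi0 be))). eauto. }
  rewrite E1. apply Hi0.
  apply (epsilon_spec (inhabits (fun _ : nat => false)) (fun be' => phi0 be' = phi0 be)). eauto.
Qed.

Variable code : R -> (nat -> bool).
Hypothesis Hcode : forall be, exists t, Sidx t /\ code t = be.

Definition Target t := Cset (fun n => code t (S n)).

Definition Fstep (t : R) (rec : forall s, ltW s t -> R) : R :=
  epsilon (inhabits 0) (fun p => Target t p /\ forall s (H : ltW s t), rec s H <> p).

Definition xt : R -> R := Fix ltW_wf (fun _ => R) Fstep.

Lemma xt_eq t : xt t = epsilon (inhabits 0) (fun p => Target t p /\ forall s (H : ltW s t), xt s <> p).
Proof.
  unfold xt at 1. rewrite Fix_eq.
  - reflexivity.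
  - intros x f g Hfg. unfold Fstep.
    assert (f = g) by (apply functional_extensionality_dep; intros s;
                       apply functional_extensionality_dep; intros H; auto).
    subst. reflexivity.
Qed.

Definition Good t := Sidx t /\ ~ countable_R (Target t).

Lemma xt_spec t : Good t -> Target t (xt t) /\ forall s, ltW s t -> xt s <> xt t.
Proof.
  intros [Hs Hc].
  assert (E : exists p, Target t p /\ forall s (H : ltW s t), xt s <> p).
  { apply NNPP. intros Hn.
    destruct (inj_into (Target t) (Cset_gdelta _) Hc) as [g [Hgi Hg]].
    apply (S1 t Hs).
    assert (Hex : forall r, exists s, ltW s t /\ xt s = g r).
    { intros r. apply NNPP. intros Hr. apply Hn. exists (g r). split; auto.
      intros s H E. apply Hr. eauto. }
    exists (fun r => epsilon (inhabits 0) (fun s => ltW s t /\ xt s = g r)).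
    split.
    - intros r r' E. apply Hgi.
      destruct (epsilon_spec (inhabits 0) (fun s => ltW s t /\ xt s = g r) (Hex r)) as [_ E1].
      destruct (epsilon_spec (inhabits 0) (fun s => ltW s t /\ xt s = g r') (Hex r')) as [_ E2].
      rewrite <- E1, <- E2, E. reflexivity.
    - intros r. apply (epsilon_spec (inhabits 0) (fun s => ltW s t /\ xt s = g r) (Hex r)). }
  pose proof (epsilon_spec (inhabits 0) _ E) as Hsp. rewrite <- xt_eq in Hsp.
  destruct Hsp as [H1 H2]. split; auto.
Qed.

Lemma xt_distinct t t' : Good t -> Good t' -> t <> t' -> xt t <> xt t'.
Proof.
  intros Ht Ht' Hne. destruct (W_total t t') as [H|H].
  - apply (proj2 (xt_spec t' Ht')). split; auto.
  - intros E. symmetry in E. revert E. apply (proj2 (xt_spec t Ht)). split; auto.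
Qed.

Definition Bset (p : R) : Prop := exists t, Good t /\ code t O = true /\ xt t = p.

Lemma Bset_prop G : G_delta_R G -> ~ countable_R G ->
  (exists p, G p /\ Bset p) /\ (exists p, G p /\ ~ Bset p).
Proof.
  intros Hg Hc. destruct (code_complete G Hg) as [be Hbe].
  assert (Hside : forall s : bool, exists t, Good t /\ code t O = s /\ forall x, G x <-> Target t x).
  { intros s. destruct (Hcode (fun n => match n with O => s | S m => be m end)) as [t [Ht Hct]].
    exists t. unfold Good, Target. rewrite Hct. split; [split; auto|split; auto].
    intros Hcn. apply Hc. revert Hcn. apply countable_sub. intros x Gx. apply Hbe; auto. }
  split.
  - destruct (Hside true) as [t [Gt [St Ht]]]. exists (xt t). split.
    + apply Ht. apply xt_spec; auto.
    + exists t. auto.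
  - destruct (Hside false) as [t [Gt [St Ht]]]. exists (xt t). split.
    + apply Ht. apply xt_spec; auto.
    + intros [t' [Gt' [St' E]]]. apply (xt_distinct t' t); auto.
      intros ->. congruence.
Qed.

End Bern.
Lemma bern_exists : forall (W : R -> R -> Prop),
  (forall P : R -> Prop, (exists x, P x) -> exists z, P z /\ forall x, P x -> W z x) ->
  (forall x y, W x y -> W y x -> x = y) ->
  exists B : R -> Prop, forall G, G_delta_R G -> ~ countable_R G ->
    (exists p, G p /\ B p) /\ (exists p, G p /\ ~ B p).
Proof.
  intros W Hmin Hanti.
  destruct (codes_exist W Hmin Hanti) as [code Hcode].
  exists (Bset W Hmin Hanti code). intros G Hg Hc. apply Bset_prop; auto.
Qed.

Lemma sec_lemma (c : R) (h : R -> R) : (forall y, y <> c -> h y = 0) ->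
  equi_baire1 (fun _ => True) dist_R (fun (n : nat) y => h y).
Proof.
  intros Hh eps Heps.
  exists (fun y => if Req_EM_T y c then 1 else Rabs (y - c)). split.
  - intros y _. destruct (Req_EM_T y c); [lra|]. apply Rabs_pos_lt. lra.
  - intros y z _ _ n Hd. unfold dist_R in Hd.
    assert (E : h y = h z).
    { destruct (Req_dec y z) as [->|Hyz]; auto.
      destruct (Req_EM_T y c) as [Ey|Ey]; destruct (Req_EM_T z c) as [Ez|Ez].
      - congruence.
      - exfalso. subst y. generalize (Rmin_r 1 (Rabs (z - c))). rewrite Rabs_minus_sym in Hd. lra.
      - exfalso. subst z. generalize (Rmin_l (Rabs (y - c)) 1). lra.
      - rewrite !Hh; auto. }
    rewrite E. unfold Rminus. rewrite Rplus_opp_r, Rabs_R0. lra.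
Qed.

Lemma dist_diag w z : dist_R2 (w, w) (z, z) <= 2 * Rabs (w - z).
Proof.
  unfold dist_R2. simpl fst. simpl snd.
  rewrite <- (sqrt_pow2 (2 * Rabs (w - z))) by (generalize (Rabs_pos (w - z)); lra).
  apply sqrt_le_1_alt. rewrite Rpow_mult_distr, pow2_abs. simpl. generalize (Rle_0_sqr (w - z)). unfold Rsqr. lra.
Qed.

Module WO.
Import ssreflect ssrfun ssrbool eqtype boolp wochoice Rstruct.
Lemma wo_R : exists W : R -> R -> Prop,
  (forall P : R -> Prop, (exists x, P x) -> exists z, P z /\ forall x, P x -> W z x) /\
  (forall x y, W x y -> W y x -> x = y).
Proof.
have [W HW] := well_ordering_principle R.
have refl : forall x, W x x.
  move=> x; have ne : nonempty (pred1 x) by exists x; rewrite unfold_in /=.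
  have [z [[Hz Hl] _]] := HW _ ne.
  move: Hz; rewrite unfold_in /= => /eqP Ezx; rewrite -{1}Ezx; apply: Hl; by rewrite unfold_in /=.
exists (fun x y => W x y).
split.
- move=> P [x Px].
  have ne : nonempty (fun y => `[< P y >]) by exists x; rewrite unfold_in; apply/asboolP.
  have [z [[Hz Hl] _]] := HW _ ne.
  exists z; split; first by move: Hz; rewrite unfold_in => /asboolP.
  by move=> y Py; apply: Hl; rewrite unfold_in; apply/asboolP.
- move=> x y Hxy Hyx.
  have ne : nonempty (pred2 x y) by exists x; rewrite unfold_in /= eqxx.
  have [z [_ U]] := HW _ ne.
  have mx : minimum_of W (pred2 x y) x.
    split; first by rewrite unfold_in /= eqxx.
    move=> w; rewrite unfold_in /= => /orP [/eqP ->|/eqP ->] //.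
  have my : minimum_of W (pred2 x y) y.
    split; first by rewrite unfold_in /= eqxx orbT.
    move=> w; rewrite unfold_in /= => /orP [/eqP ->|/eqP ->] //.
  by rewrite -(U _ mx) (U _ my).
Qed.
End WO.

Theorem mainTheorem18 :
  exists B : R -> Prop, bernstein B /\
  exists f : nat -> R * R -> R,
    (* f_n = g for all n, g the characteristic function of {(x,x) : x in B} *)
    (forall n p, (B (fst p) /\ fst p = snd p -> f n p = 1) /\
                 (~ (B (fst p) /\ fst p = snd p) -> f n p = 0)) /\
    (forall x : R, equi_baire1 (fun _ => True) dist_R (fun n y => f n (x, y))) /\
    (forall y : R, equi_baire1 (fun _ => True) dist_R (fun n x => f n (x, y))) /\
    (forall A : R -> Prop, G_delta_R A -> ~ meager_R A ->
       ~ equi_baire1 (fun p : R * R => A (fst p)) dist_R2 f).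
Proof.
  destruct WO.wo_R as [W [Hmin Hanti]].
  destruct (bern_exists W Hmin Hanti) as [B HB].
  exists B. split.
  { intros C Hcl Hnc. apply HB; auto. apply closed_gdelta; auto. }
  set (g := fun p : R * R => if excluded_middle_informative (B (fst p) /\ fst p = snd p) then 1 else 0).
  exists (fun _ => g). split; [|split; [|split]].
  - intros n p. unfold g. destruct excluded_middle_informative; tauto.
  - intros x. apply (sec_lemma x). intros y Hy. unfold g. simpl.
    destruct excluded_middle_informative as [[_ E]|]; auto. congruence.
  - intros y. apply (sec_lemma y (fun x => g (x, y))). intros x Hx. unfold g. simpl.
    destruct excluded_middle_informative as [[_ E]|]; auto. congruence.
  - intros A [U [HU HA]] HnM Heb.
    destruct (Heb 1) as [dl [Hpos Hd]]; [lra|].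
    assert (Hdiag : forall w z, A w -> A z -> 2 * Rabs (w - z) < Rmin (dl (w, w)) (dl (z, z)) ->
              (B w <-> B z)).
    { intros w z Aw Az Hwz.
      assert (Hdist : dist_R2 (w, w) (z, z) < Rmin (dl (w, w)) (dl (z, z))).
      { generalize (dist_diag w z). lra. }
      specialize (Hd (w, w) (z, z) Aw Az 0%nat Hdist). simpl in Hd. unfold g in Hd. simpl in Hd.
      destruct excluded_middle_informative as [[Bw _]|Bw];
      destruct excluded_middle_informative as [[Bz _]|Bz]; try tauto.
      - exfalso. rewrite Rminus_0_r, Rabs_R1 in Hd. lra.
      - exfalso. rewrite Rminus_0_l, Rabs_Ropp, Rabs_R1 in Hd. lra. }
    set (An := fun (n : nat) x => A x /\ / (INR n + 1) < dl (x, x)).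
    assert (Hnd : exists n, ~ nowhere_dense_R (An n)).
    { apply NNPP. intros Hn. apply HnM. exists An. split.
      - intros n. apply NNPP. intros H. apply Hn. eauto.
      - intros x Ax. assert (Hp : 0 < dl (x, x)) by (apply Hpos; auto).
        destruct (archimed_cor1 _ Hp) as [N [HN HN0]]. exists N. split; auto.
        assert (/ (INR N + 1) < / INR N).
        { apply Rinv_lt_contravar. apply Rmult_lt_0_compat; [apply lt_0_INR; lia|].
          generalize (pos_INR N); lra. lra. }
        lra. }
    destruct Hnd as [n Hn]. apply NNPP in Hn. destruct Hn as [x0 [e [He Hcl]]].
    set (rho := / (INR n + 1)).
    assert (Hrho : 0 < rho) by (unfold rho; apply Rinv_0_lt_compat; generalize (pos_INR n); lra).
    set (r := Rmin e (rho / 8)).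
    assert (Hr : 0 < r) by (unfold r; apply Rmin_case; lra).
    assert (Hr1 : r <= e) by apply Rmin_l.
    assert (Hr2 : r <= rho / 8) by apply Rmin_r.
    assert (Hdense : forall y, x0 - r < y < x0 + r -> forall eps, 0 < eps ->
               exists z, An n z /\ Rabs (z - y) < eps).
    { intros y Hy eps Heps. apply Hcl; auto. apply Rabs_def1; lra. }
    set (G := fun x => A x /\ x0 - r < x < x0 + r).
    assert (HGd : G_delta_R G).
    { exists (fun k x => U k x /\ x0 - r < x < x0 + r). split.
      - intros k x [Ux Hx]. destruct (HU k x Ux) as [e1 [He1 Hb1]].
        exists (Rmin e1 (Rmin (x - (x0 - r)) (x0 + r - x))). split.
        + repeat apply Rmin_case; lra.
        + intros y Hy. generalize (Rmin_l e1 (Rmin (x - (x0 - r)) (x0 + r - x)))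
            (Rmin_r e1 (Rmin (x - (x0 - r)) (x0 + r - x)))
            (Rmin_l (x - (x0 - r)) (x0 + r - x)) (Rmin_r (x - (x0 - r)) (x0 + r - x)).
          intros. split; [apply Hb1; lra|]. apply Rabs_def2 in Hy. lra.
      - intros x. unfold G. rewrite HA. split.
        + intros [H1 H2] k. auto.
        + intros H. split; [intros k; apply H|]. apply (H 0%nat). }
    assert (HGc : ~ countable_R G).
    { intros [fe Hfe].
      destruct (baire (x0 - r) (x0 + r) U fe) as [y [Hy [HUy Hne]]]; [lra|auto|..].
      - intros k y Hy eps Heps. destruct (Hdense y Hy eps Heps) as [z [[Az _] Hz]].
        exists z. split; auto. apply HA; auto.
      - destruct (Hfe y) as [m Hm]. { split; auto. apply HA; auto. }
        apply (Hne m). auto. }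
    assert (Happ : forall z, G z -> exists w, An n w /\ Rabs (w - z) < rho / 8 /\ (B w <-> B z)).
    { intros z [Az Hz]. assert (Hpz : 0 < dl (z, z)) by (apply Hpos; auto).
      destruct (Hdense z Hz (Rmin (dl (z, z)) (rho / 8) / 2)) as [w [[Aw Hw] Hwz]].
      { apply Rmin_case; lra. }
      generalize (Rmin_l (dl (z, z)) (rho / 8)) (Rmin_r (dl (z, z)) (rho / 8)). intros M1 M2.
      exists w. split; [split; auto|split; [lra|]].
      apply Hdiag; auto. apply Rmin_case; fold rho in Hw; lra. }
    destruct (HB G HGd HGc) as [[p [Gp Bp]] [p' [Gp' Bp']]].
    destruct (Happ p Gp) as [w [[Aw Hw] [Hwp Ew]]].
    destruct (Happ p' Gp') as [w' [[Aw' Hw'] [Hwp' Ew']]].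
    apply Bp'. apply Ew'. apply (Hdiag w w' Aw Aw'); [|apply Ew; auto].
    fold rho in Hw, Hw'.
    assert (Rabs (w - w') <= Rabs (w - p) + Rabs (p - p') + Rabs (p' - w')).
    { replace (w - w') with ((w - p) + (p - p') + (p' - w')) by ring.
      eapply Rle_trans; [apply Rabs_triang|]. apply Rplus_le_compat_r. apply Rabs_triang. }
    assert (Rabs (p - p') < 2 * r).
    { destruct Gp as [_ G1]. destruct Gp' as [_ G2]. apply Rabs_def1; lra. }
    rewrite (Rabs_minus_sym p' w') in *.
    apply Rmin_case; lra.
Qed.
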